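(* Consider the control-affine system $\dot{x}(t) = f(x(t)) + g(x(t))u(t) + d(t)$ on $t \ge 0$, with $x(t)\in\mathbb{R}^n$, $u(t)\in\mathbb{R}^m$, $f,g$ continuously differentiable, and $d(t)\in\mathbb{R}^n$ the (unknown) disturbance. Let $\phi_t:\mathbb{R}^{nM}\to\mathbb{R}^{n\times p}$ be a representation map, $z(t)$ the time-delay embedding of past states, and $\theta^*\in\mathbb{R}^{p}$ a constant parameter such that $$d(t) = \phi_t(z(t))\theta^* + \gamma(t),$$ where $t\mapsto \phi_t(z(t))\theta^*$ is differentiable and the learning residual $\gamma$ is differentiable with $\|\gamma(t)\|\le\bar\gamma$ and $\|\dot\gamma(t)\|\le \bar d_\gamma$ for all $t\ge 0$, for positive constants $\bar\gamma,\bar d_\gamma$. Let $L\in\mathbb{R}^{n\times n}$ be symmetric positive definite, set $d_{model}(t)=\phi_t(z(t))\theta^*$, and define the estimator $$\dot{\xi} = -L\big(\xi + d_{model} + Lx + f(x) + g(x)u\big),\qquad \hat d = d_{model} + Lx + \xi,$$ with arbitrary initial condition $\xi(0)\in\mathbb{R}^n$. Then the disturbance estimation error $\tilde d = \hat d - d$ satisfies $$\|\tilde d(t)\| \le e^{-\lambda_{\min}(L)t}\|\tilde d(0)\| + \frac{\bar d_\gamma}{\lambda_{\min}(L)}\big(1-e^{-\lambda_{\min}(L)t}\big)\quad\text{for all } t\ge0,$$ i.e. $\tilde d$ converges exponentially to the ball $\{\|\tilde d\|\le \bar d_\gamma/\lambda_{\min}(L)\}$, whose radius depends only on $L$ and $\bar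 d_\gamma$ (and not on $\bar\gamma$).
   Context: $\lambda_{\min}(L)$ denotes the smallest eigenvalue of $L$. The time-delay embedding is $z=[x(t),x(t-\tau),\dots,x(t-M\tau)]$ (a finite window of past states); only the differentiability in time of $\phi_t(z(t))\theta^*$ is used. The auxiliary variable $\xi$ is introduced so that the state derivative $\dot x$ is not needed. All signals are assumed to be absolutely continuous / differentiable as required so that the estimator ODE has a solution. *)

(* Defs.v *)
From HB Require Import structures.
From mathcomp Require Import all_boot all_order all_algebra.
From mathcomp Require Import all_classical all_reals all_analysis.
Set Implicit Arguments. Unset Strict Implicit. Unset Printing Implicit Defensive.
Import Order.TTheory GRing.Theory Num.Theory.
Import numFieldNormedType.Exports.
Local Open Scope ring_scope.

Definition vnorm (R : realType) (n : nat) (v : 'cV[R]_n) : R :=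
  Num.sqrt (\sum_(i < n) v i 0 ^+ 2).

Definition sym_posdef (R : realType) (n : nat) (L : 'M[R]_n) : Prop :=
  L^T = L /\ forall v : 'cV[R]_n, v != 0 -> 0 < (v^T *m L *m v) 0 0.

Definition is_lambda_min (R : realType) (n : nat) (L : 'M[R]_n) (lam : R) : Prop :=
  eigenvalue L lam /\ forall mu : R, eigenvalue L mu -> lam <= mu.

(* Time-delay embedding with M blocks: z(t) = [x(t); x(t-tau); ...; x(t-(M-1)tau)],
   stored as an n x M matrix (column k = x(t - k tau)) and flattened into R^(nM). *)
Definition delay_embed (R : realType) (n M : nat) (tau : R)
  (x : R -> 'cV[R]_n) (t : R) : 'cV[R]_(n * M) :=
  (mxvec (\matrix_(i < n, k < M) x (t - k%:R * tau) i 0))^T.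

(* Main.v *)
Require Import Defs.
From HB Require Import structures.
From mathcomp Require Import all_boot all_order all_algebra.
From mathcomp Require Import all_classical all_reals all_analysis.
From mathcomp Require Import ring lra.
Import Order.TTheory GRing.Theory Num.Theory.
Import numFieldNormedType.Exports.
Local Open Scope classical_set_scope.
Local Open Scope ring_scope.
Section LA.
Variables (R : realType) (n : nat).
Implicit Types (u v w : 'cV[R]_n) (M B : 'M[R]_n).

Definition nrm2 (v : 'cV[R]_n) : R := \sum_(i < n) v i 0 ^+ 2.
Definition bf (M : 'M[R]_n) (u v : 'cV[R]_n) : R := (u^T *m M *m v) 0 0.

Lemma nrm2E v : nrm2 v = (v^T *m v) 0 0.
Proof. by rewrite /nrm2 mxE; apply: eq_bigr => i _; rewrite !mxE expr2. Qed.

Lemma nrm2_ge0 v : 0 <= nrm2 v.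
Proof. by apply: sumr_ge0 => i _; rewrite sqr_ge0. Qed.

Lemma nrm2_coord v i : v i 0 ^+ 2 <= nrm2 v.
Proof.
rewrite /nrm2 (bigD1 i) //= lerDl; apply: sumr_ge0 => j _; exact: sqr_ge0.
Qed.

Lemma nrm2_eq0 v : nrm2 v = 0 -> v = 0.
Proof.
move=> h; apply/matrixP => i j; rewrite (ord1 j) mxE.
have := nrm2_coord v i; rewrite h => H.
have : v i 0 ^+ 2 = 0 by apply/eqP; rewrite eq_le H sqr_ge0.
by move/eqP; rewrite sqrf_eq0 => /eqP.
Qed.

Lemma bfE M u v : bf M u v = \sum_i \sum_j u i 0 * M i j * v j 0.
Proof.
rewrite /bf mxE [RHS]exchange_big /=; apply: eq_bigr => j _; rewrite mxE big_distrl /=.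
by apply: eq_bigr => i _; rewrite !mxE.
Qed.

Definition Kof (M : 'M[R]_n) : R := \sum_i \sum_j `|M i j|.

Lemma Kof_ge0 M : 0 <= Kof M.
Proof. by apply: sumr_ge0 => i _; apply: sumr_ge0 => j _. Qed.

Lemma bf_le M v : bf M v v <= Kof M * nrm2 v.
Proof.
rewrite bfE /Kof big_distrl /=; apply: ler_sum => i _.
rewrite big_distrl /=; apply: ler_sum => j _.
have hi := nrm2_coord v i; have hj := nrm2_coord v j.
set a := v i 0 in hi *; set b := v j 0 in hj *; set N := nrm2 v in hi hj *.
set m := M i j.
have h1 : a * m * b <= `|m| * (`|a| * `|b|).
  rewrite -normrM; apply: le_trans (ler_norm _) _.
  by rewrite !normrM le_eqVlt; apply/orP; left; apply/eqP; ring.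
apply: le_trans h1 _; apply: ler_wpM2l => //.
have ha : `|a| ^+ 2 <= N by rewrite real_normK ?num_real.
have hb : `|b| ^+ 2 <= N by rewrite real_normK ?num_real.
have := normr_ge0 a; have := normr_ge0 b.
set A := `|a| in ha *; set B := `|b| in hb *; nra.
Qed.

Lemma bfC M u v : M^T = M -> bf M u v = bf M v u.
Proof.
move=> sM; rewrite /bf.
have -> : (u^T *m M *m v) 0 0 = ((u^T *m M *m v)^T) 0 0 by rewrite [RHS]mxE.
by rewrite !trmx_mul trmxK sM mulmxA.
Qed.

Lemma bfDr M u v w : bf M u (v + w) = bf M u v + bf M u w.
Proof. by rewrite /bf mulmxDr mxE. Qed.
Lemma bfDl M u v w : bf M (u + v) w = bf M u w + bf M v w.
Proof. by rewrite /bf linearD /= mulmxDl mulmxDl mxE. Qed.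
Lemma bfZr M u v (s : R) : bf M u (s *: v) = s * bf M u v.
Proof. by rewrite /bf -scalemxAr mxE. Qed.
Lemma bfZl M u v (s : R) : bf M (s *: u) v = s * bf M u v.
Proof. by rewrite /bf linearZ /= -!scalemxAl mxE. Qed.

Lemma discr (a b c : R) : 0 <= a -> (forall s, 0 <= a * s ^+ 2 + 2 * b * s + c) ->
  b ^+ 2 <= a * c.
Proof.
move=> ha h; have hc : 0 <= c by have := h 0; rewrite expr0n /= !mulr0 !add0r.
have [a0|] := ltP 0 a.
  have := h (- b / a).
  have -> : a * (- b / a) ^+ 2 + 2 * b * (- b / a) + c = c - b ^+ 2 / a.
    by field; rewrite gt_eqF.
  rewrite subr_ge0 ler_pdivrMr // => H; by rewrite mulrC.
move=> a0; have a00 : a = 0 by apply/eqP; rewrite eq_le a0 ha.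
rewrite a00 mul0r.
case: (eqVneq b 0) => [->|bn0]; first by rewrite expr0n.
exfalso.
have := h (- (c + 1) / (2 * b)).
have -> : 2 * b * (- (c + 1) / (2 * b)) = - (c + 1) by field.
rewrite a00 mul0r; lra.
Qed.

Lemma cs_psd B u v : B^T = B -> (forall w, 0 <= bf B w w) ->
  bf B u v ^+ 2 <= bf B v v * bf B u u.
Proof.
move=> sB psd; apply: discr; first exact: psd.
move=> s.
have := psd (u + s *: v).
rewrite bfDl !bfDr !bfZl !bfZr (bfC B v u sB).
by move=> H; apply: le_trans H _; rewrite le_eqVlt; apply/orP; left; apply/eqP; ring.
Qed.

Lemma nrm2_gt0 v : v != 0 -> 0 < nrm2 v.
Proof.
move=> vn0; rewrite lt_def nrm2_ge0 andbT; apply/eqP => /nrm2_eq0 h.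
by rewrite h eqxx in vn0.
Qed.

Lemma bf1 v : bf 1%:M v v = nrm2 v.
Proof. by rewrite /bf mulmx1 nrm2E. Qed.

Lemma bfBM M1 M2 u v : bf (M1 - M2) u v = bf M1 u v - bf M2 u v.
Proof. by rewrite /bf mulmxBr mulmxBl [LHS]mxE [X in _ + X]mxE. Qed.

Lemma bfZM (a : R) M u v : bf (a%:M *m M) u v = a * bf M u v.
Proof. by rewrite /bf mul_scalar_mx -scalemxAr -scalemxAl mxE. Qed.

Lemma psd_unit_bound B : B^T = B -> (forall w, 0 <= bf B w w) ->
  B \in unitmx -> exists2 K, 0 < K & forall v, nrm2 v <= K * bf B v v.
Proof.
move=> sB psd uB.
set Bi := invmx B.
have KI0 := Kof_ge0 (Bi^T *m Bi); have KB0 := Kof_ge0 B.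
exists ((1 + Kof (Bi^T *m Bi)) * (1 + Kof B)).
  by apply: mulr_gt0; apply: ltr_pwDl.
move=> v; set y := B *m v.
have h1 : nrm2 v = bf (Bi^T *m Bi) y y.
  rewrite /bf nrm2E -{1 2}(mulKmx uB v) -/Bi -/y trmx_mul.
  by rewrite !mulmxA.
have h2 := bf_le (Bi^T *m Bi) y; rewrite -h1 in h2.
have h3 : nrm2 y = bf B y v by rewrite /bf -mulmxA -/y nrm2E.
have h4 := @cs_psd B y v sB psd; rewrite -h3 in h4.
have h5 := bf_le B y.
have q0 := psd v; have N0 := nrm2_ge0 y.
set q := bf B v v in q0 h4 *; set N := nrm2 y in N0 h2 h3 h4 h5 *.
set KI := Kof (Bi^T *m Bi) in KI0 h2 *; set KB := Kof B in KB0 h5 *.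
have h6 : N <= KB * q.
  have [Nz|Np] := eqVneq N 0; first by rewrite Nz mulr_ge0.
  have Np' : 0 < N by rewrite lt_def Np N0.
  have : N * N <= N * (KB * q).
    rewrite -expr2; apply: le_trans h4 _.
    have := ler_wpM2l q0 h5; nra.
  by rewrite ler_pM2l.
nra.
Qed.

Lemma eig_bf L a : eigenvalue L a -> exists2 v, v != 0 & bf L v v = a * nrm2 v.
Proof.
move=> /eigenvalueP [w wL wn0]; exists w^T; first by rewrite trmx_eq0.
by rewrite /bf trmxK wL nrm2E trmxK -scalemxAl mxE.
Qed.

Lemma rayleigh L lam : sym_posdef L -> is_lambda_min L lam ->
  0 < lam /\ forall v, lam * nrm2 v <= bf L v v.
Proof.
move=> [sL pdL] [eL minL].
have psdL w : 0 <= bf L w w.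
  have [->|wn0] := eqVneq w 0; last exact/ltW/pdL.
  by rewrite /bf mulmx0 mxE.
have [v0 v0n0 v0e] := eig_bf _ _ eL.
have n0 := nrm2_gt0 _ v0n0.
have lam0 : 0 < lam.
  by have := pdL _ v0n0; rewrite -/(bf L v0 v0) v0e pmulr_lgt0.
split => //.
pose S := [set a : R | forall v, a * nrm2 v <= bf L v v].
have S0 : S 0 by move=> v; rewrite mul0r.
have Sub : ubound S lam.
  move=> a Sa; have := Sa v0; rewrite v0e ler_pM2r //.
have hS : has_sup S by split; [exists 0|exists lam].
set mu := sup S.
have Smu : S mu.
  move=> v; apply/ler_addgt0Pr => e e0.
  have N0 := nrm2_ge0 v.
  have ep : 0 < e / (nrm2 v + 1) by apply: divr_gt0 => //; apply: ltr_pwDr.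
  have [a Sa lta] := sup_adherent ep hS.
  have := Sa v; rewrite -/mu => h.
  have h' : (mu - e / (nrm2 v + 1)) * nrm2 v <= bf L v v.
    by apply: le_trans h; apply: ler_wpM2r => //; apply: ltW.
  have h'' : e / (nrm2 v + 1) * nrm2 v <= e.
    rewrite mulrAC ler_pdivrMr; last by apply: ltr_pwDr.
    by rewrite ler_pM2l // lerDl.
  move: h'; rewrite mulrBl; lra.
have eigmu : eigenvalue L mu.
  apply: contraT => neig.
  have uB : (L - mu%:M) \in unitmx.
    by rewrite -row_free_unit -kermx_eq0; move: neig; rewrite /eigenvalue /eigenspace negbK.
  have sB : (L - mu%:M)^T = L - mu%:M by rewrite linearB /= tr_scalar_mx sL.
  have psdB w : 0 <= bf (L - mu%:M) w w.
    by rewrite bfBM -[mu%:M]mulmx1 bfZM bf1 subr_ge0; apply: Smu.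
  have [K K0 hK] := psd_unit_bound _ sB psdB uB.
  have : S (mu + K^-1).
    move=> v; have := hK v; rewrite bfBM -[mu%:M]mulmx1 bfZM bf1 => h.
    rewrite mulrDl; have : K^-1 * nrm2 v <= bf L v v - mu * nrm2 v.
      by rewrite ler_pdivrMl.
    lra.
  move/(sup_upper_bound hS); rewrite -/mu => h.
  have : 0 < K^-1 by rewrite invr_gt0.
  lra.
have lmu := minL _ eigmu.
move=> v; apply: le_trans (Smu v); apply: ler_wpM2r => //; exact: nrm2_ge0.
Qed.

End LA.
Arguments rayleigh {R n L lam}.
Arguments cs_psd {R n B u v}.
Arguments nrm2 {R n}.
Arguments bf {R n}.
Section AN.
Variable R : realType.

Lemma is_derive_coord a b (F : R -> 'M[R]_(a, b)) (t : R) (D : 'M[R]_(a, b)) i j :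
  is_derive t 1 F D -> is_derive t 1 (fun s => F s i j) (D i j).
Proof.
move=> [dF vF]; apply: DeriveDef.
  by move/derivable_mxP : dF; apply.
by rewrite derive_mx // in vF; rewrite -vF mxE.
Qed.

Lemma cvg_coord a b (F : R -> 'M[R]_(a, b)) (G : set_system R) {FG : Filter G}
  (l : 'M[R]_(a, b)) i j : F @ G --> l -> (fun s => F s i j) @ G --> l i j.
Proof.
move=> h.
have c : {for l, continuous (fun N : 'M[R]_(a, b) => N i j)}.
  exact/differentiable_continuous/differentiable_coord.
exact: (continuous_cvg _ c h).
Qed.

Lemma cvg_sum_ord k (G : set_system R) {FG : Filter G} (h : 'I_k -> R -> R) (l : 'I_k -> R) :
  (forall i, h i @ G --> l i) -> (\sum_(i < k) h i) @ G --> \sum_(i < k) l i.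
Proof.
elim: k h l => [|k IH] h l hl.
  by rewrite !big_ord0; exact: cvg_cst.
rewrite !big_ord_recr /=; apply: cvgD; last exact: hl.
by apply: IH => i; exact: hl.
Qed.

Lemma isd_der (f : R -> R) (t df : R) : is_derive t 1 f df -> derivable f t 1.
Proof. by move=> H; exact: (@ex_derive _ _ _ _ _ _ _ H). Qed.

Lemma isd_cont (f : R -> R) (t df : R) : is_derive t 1 f df -> {for t, continuous f}.
Proof.
by move=> H; apply: differentiable_continuous; rewrite -derivable1_diffP; exact: isd_der H.
Qed.

Lemma is_derive_cM (f : R -> R) (t df k : R) :
  is_derive t 1 f df -> is_derive t 1 (fun s => k * f s) (k * df).
Proof. by move=> h; have := is_deriveZ k h. Qed.
Arguments is_derive_cM [f t df] k.

Lemma compare (S dS : R -> R) (a c T : R) : 0 < a -> 0 <= T ->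
  (forall s : R, 0 < s -> is_derive s 1 S (dS s)) ->
  (forall s : R, 0 < s -> dS s <= - a * S s + c) ->
  S @ at_right 0 --> S 0 ->
  S T <= expR (- a * T) * S 0 + c / a * (1 - expR (- a * T)).
Proof.
move=> a0 T0 hS hdS S0.
have [->|Tp] := eqVneq T 0.
  by rewrite mulr0 expR0 mul1r subrr mulr0 addr0.
have Tp' : 0 < T by rewrite lt_def Tp T0.
pose h := fun s => expR (a * s) * S s - c / a * expR (a * s).
have hE (s : R) : is_derive s 1 (fun s => expR (a * s)) (expR (a * s) * a).
  have := @is_derive1_comp R expR (fun s => a * s) s _ _ (is_derive_expR (a * s))
    (is_derive_cM a (is_derive_id s 1)).
  by rewrite mulr1.
have hh (s : R) : 0 < s -> is_derive s 1 h (expR (a * s) * (a * S s + dS s - c)).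
  move=> s0.
  have H1 := is_deriveM (hE s) (hS s s0).
  have H2 := is_deriveB H1 (is_derive_cM (c / a) (hE s)).
  apply: is_derive_eq H2 _.
  rewrite /= /GRing.scale /=; field.
  by apply: lt0r_neq0; exact: a0.
have hc (r : R) : 0 < r -> {for r, continuous h}.
  move=> r0; exact: isd_cont (hh r r0).
have cont : {within `[0, T], continuous h}.
  apply/(continuous_within_itvP _ Tp'); split.
  - move=> s; rewrite in_itv /= => /andP[s0 _]; exact: hc.
  - apply: cvgB; first apply: cvgM => //.
      apply: cvg_at_right_filter.
      exact: isd_cont (hE 0).
    apply: cvgMl_tmp; apply: cvg_at_right_filter.
    exact: isd_cont (hE 0).
  - exact/cvg_at_left_filter/hc.
have hh' : forall s, s \in `]0, T[ -> is_derive s 1 h (expR (a * s) * (a * S s + dS s - c)).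
  by move=> s; rewrite in_itv /= => /andP[s0 _]; exact: hh.
have [z z0T hz] := MVT Tp' hh' cont.
have hz0 : h T - h 0 <= 0.
  rewrite hz; apply: mulr_le0_ge0; last by rewrite subr0 ltW.
  move: z0T; rewrite in_itv /= => /andP[zp _].
  apply: mulr_ge0_le0; first exact: expR_ge0.
  have := hdS z zp; lra.
move: hz0; rewrite /h mulr0 expR0 mul1r mulr1.
have eT : 0 < expR (a * T) by apply: expR_gt0.
have eN : expR (- a * T) = (expR (a * T))^-1 by rewrite mulNr expRN.
rewrite eN => H.
have H2 : S T <= (expR (a * T))^-1 * (S 0 - c / a + c / a * expR (a * T)).
  by rewrite ler_pdivlMl //; lra.
apply: le_trans H2 _; rewrite le_eqVlt; apply/orP; left; apply/eqP.
by field; rewrite !lt0r_neq0.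
Qed.
End AN.
Arguments is_derive_coord {R a b F t D} i j.
Arguments cvg_coord {R a b F G FG l} i j.
Arguments cvg_sum_ord {R k G FG h l}.
Arguments is_derive_cM {R f t df} k.
Arguments isd_der {R f t df}.
Arguments isd_cont {R f t df}.
Arguments compare {R S dS a c T}.
Theorem theorem1 (R : realType) (n m p M : nat)
  (f : 'cV[R]_n -> 'cV[R]_n) (g : 'cV[R]_n -> 'M[R]_(n, m))
  (x : R -> 'cV[R]_n) (u : R -> 'cV[R]_m) (d : R -> 'cV[R]_n)
  (tau : R) (phi : R -> 'cV[R]_(n * M) -> 'M[R]_(n, p)) (theta : 'cV[R]_p)
  (gamma dgamma : R -> 'cV[R]_n) (gbar dgbar : R)
  (L : 'M[R]_n) (lam : R) (xi : R -> 'cV[R]_n) :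
  (* f, g continuously differentiable *)
  (forall y : 'cV[R]_n, differentiable f y) ->
  (forall v : 'cV[R]_n, continuous (fun y => 'D_v f y)) ->
  (forall y : 'cV[R]_n, differentiable g y) ->
  (forall v : 'cV[R]_n, continuous (fun y => 'D_v g y)) ->
  (* system dynamics on t >= 0 *)
  (forall t : R, 0 < t -> is_derive t 1 x (f (x t) + g (x t) *m u t + d t)) ->
  x @ at_right 0 --> x 0 ->
  (* disturbance model with the time-delay embedding *)
  0 < tau ->
  (forall t : R, 0 <= t ->
     d t = phi t (delay_embed M tau x t) *m theta + gamma t) ->
  (forall t : R, 0 < t ->
     derivable (fun s : R => phi s (delay_embed M tau x s) *m theta) t 1) ->
  (* learning residual *)
  0 < gbar -> 0 < dgbar ->
  (forall t : R, 0 < t -> is_derive t 1 gamma (dgamma t)) ->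
  gamma @ at_right 0 --> gamma 0 ->
  (forall t : R, 0 <= t -> vnorm (gamma t) <= gbar) ->
  (forall t : R, 0 < t -> vnorm (dgamma t) <= dgbar) ->
  (* gain matrix *)
  sym_posdef L -> is_lambda_min L lam ->
  (* estimator *)
  (forall t : R, 0 < t -> is_derive t 1 xi
     (- (L *m (xi t + phi t (delay_embed M tau x t) *m theta + L *m x t
               + f (x t) + g (x t) *m u t)))) ->
  xi @ at_right 0 --> xi 0 ->
  let dhat := fun t => phi t (delay_embed M tau x t) *m theta + L *m x t + xi t in
  let dtil := fun t => dhat t - d t in
  forall t : R, 0 <= t ->
    vnorm (dtil t) <= expR (- lam * t) * vnorm (dtil 0)
                      + dgbar / lam * (1 - expR (- lam * t)).
Proof.
move=> fd fc gd gc hx x0 tau0 hd hdm gb0 dgb0 hg g0 hgb hdg hL hlam hxi xi0 dhat dtil t t0.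
have [lam0 ray] := rayleigh hL hlam.
have sL : L^T = L := hL.1.
pose dm s := phi s (delay_embed M tau x s) *m theta.
pose Ev s := L *m x s + xi s - gamma s.
pose dE s := - (L *m Ev s) - dgamma s.
have dtilE s : 0 <= s -> dtil s = Ev s.
  move=> s0; rewrite /dtil /dhat hd // /Ev.
  by apply/matrixP => a b; rewrite !mxE; ring.
pose e (i : 'I_n) := \sum_(j < n) (fun r => L i j * x r j 0) + (fun r => xi r i 0)
   - (fun r => gamma r i 0).
have eE i s : e i s = Ev s i 0.
  by rewrite /e /= fct_sumE /Ev !mxE.
have he i (s : R) : 0 < s -> is_derive s 1 (e i) (dE s i 0).
  move=> s0.
  have h1 := is_derive_sum (fun j => is_derive_cM (L i j) (is_derive_coord j 0 (hx s s0))).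
  have h2 := is_derive_coord i 0 (hxi s s0).
  have h3 := is_derive_coord i 0 (hg s s0).
  apply: is_derive_eq (is_deriveB (is_deriveD h1 h2) h3) _.
  have key : L *m (f (x s) + g (x s) *m u s + d s)
     + (- (L *m (xi s + dm s + L *m x s + f (x s) + g (x s) *m u s)))
     - dgamma s = dE s.
    rewrite /dE /Ev hd ?ltW // -/(dm s).
    rewrite !(mulmxDr, mulmxN, mulmxBr).
    by apply/matrixP => a b; rewrite !mxE; ring.
  by rewrite -key !mxE.
pose N := \sum_(i < n) (e i) ^+ 2.
have NE (s : R) : N s = nrm2 (Ev s).
  rewrite /N fct_sumE /nrm2; apply: eq_bigr => i _.
  by rewrite -eE.
have hN (s : R) : 0 < s -> is_derive s 1 N (2 * bf 1%:M (Ev s) (dE s)).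
  move=> s0.
  have h1 := is_derive_sum (fun i => is_deriveX 2 (he i s s0)).
  apply: is_derive_eq h1 _.
  rewrite /bf mulmx1 mxE mulr_sumr; apply: eq_bigr => i _.
  rewrite eE !mxE /GRing.scale /=; ring.
have bnd (s : R) : 0 < s ->
    bf 1%:M (Ev s) (dE s) <= - lam * N s + Num.sqrt (N s) * dgbar.
  move=> s0.
  have E1 : bf 1%:M (Ev s) (dE s) = - bf L (Ev s) (Ev s) - bf 1%:M (Ev s) (dgamma s).
    rewrite /bf /dE !mulmx1 mulmxBr mulmxN !mulmxA.
    by rewrite !mxE.
  have CS := @cs_psd R n 1%:M (Ev s) (dgamma s) (trmx1 _ _)
    (fun w => eq_ind_r (fun z => 0 <= z) (nrm2_ge0 R n w) (bf1 R n w)).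
  rewrite !bf1 in CS.
  have hw : nrm2 (dgamma s) <= dgbar ^+ 2.
    have := hdg s s0; rewrite /vnorm -/(nrm2 (dgamma s)) => H.
    rewrite -(sqr_sqrtr (nrm2_ge0 R n (dgamma s))).
    have := sqrtr_ge0 (nrm2 (dgamma s)); nra.
  have hr := sqr_sqrtr (nrm2_ge0 R n (Ev s)).
  have hr0 := sqrtr_ge0 (nrm2 (Ev s)).
  have hray := ray (Ev s).
  rewrite E1 NE.
  set q := bf 1%:M (Ev s) (dgamma s) in CS *.
  set r := Num.sqrt (nrm2 (Ev s)) in hr hr0 *.
  set NN := nrm2 (Ev s) in hr CS hray *.
  set w2 := nrm2 (dgamma s) in CS hw *.
  have : q ^+ 2 <= (r * dgbar) ^+ 2.
    apply: le_trans CS _; rewrite exprMn hr mulrC; apply: ler_wpM2l => //.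
    by rewrite -hr sqr_ge0.
  have : 0 <= r * dgbar by apply: mulr_ge0 => //; apply: ltW.
  nra.
have N0 (s : R) : 0 <= N s by rewrite NE; exact: nrm2_ge0.
rewrite (dtilE t t0) (dtilE 0 (lexx _)) /vnorm -!/(nrm2 _) -!NE.
apply/ler_addgt0Pr => del del0.
pose Sf := fun s => Num.sqrt (N s + del ^+ 2).
pose dS := fun s => (2 * Num.sqrt (N s + del ^+ 2))^-1 * (2 * bf 1%:M (Ev s) (dE s)).
have hSd (s : R) : 0 < s -> is_derive s 1 Sf (dS s).
  move=> s0.
  have pos : 0 < N s + del ^+ 2.
    by apply: ltr_wpDl => //; apply: exprn_gt0.
  have := @is_derive1_comp R Num.sqrt (N + cst (del ^+ 2)) s _ _ (is_derive1_sqrt pos)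
     (is_deriveD (hN s s0) (is_derive_cst (del ^+ 2) s 1)).
  by rewrite addr0.
have hSb (s : R) : 0 < s -> dS s <= - lam * Sf s + (dgbar + lam * del).
  move=> s0; have b := bnd s s0.
  have hN0 := N0 s.
  have hd2 : 0 <= del ^+ 2 by apply: sqr_ge0.
  have pos : 0 < N s + del ^+ 2 by apply: ltr_wpDl => //; apply: exprn_gt0.
  have hr := sqr_sqrtr hN0; have hr0 := sqrtr_ge0 (N s).
  have hq := sqr_sqrtr (ltW pos); have hq0 : 0 < Num.sqrt (N s + del ^+ 2).
    by rewrite sqrtr_gt0.
  have rq : Num.sqrt (N s) <= Num.sqrt (N s + del ^+ 2).
    have H : N s <= N s + del ^+ 2 by rewrite lerDl.
    exact: ler_wsqrtr H.
  have dq : del <= Num.sqrt (N s + del ^+ 2).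
    have H : del ^+ 2 <= N s + del ^+ 2 by rewrite lerDr.
    by have := ler_wsqrtr H; rewrite sqrtr_sqr gtr0_norm.
  rewrite /dS /Sf.
  set B := bf 1%:M (Ev s) (dE s) in b *.
  set q := Num.sqrt (N s + del ^+ 2) in hq hq0 rq dq *.
  set r := Num.sqrt (N s) in b hr hr0 rq *.
  set NN := N s in b hN0 hr hq pos *.
  rewrite invfM mulrACA mulVf ?mul1r; last by rewrite pnatr_eq0.
  rewrite mulrC ler_pdivrMr //.
  have h1 : 0 <= (q - r) * dgbar by apply: mulr_ge0; [rewrite subr_ge0 | apply: ltW].
  have h2 : 0 <= lam * del * (q - del).
    by apply: mulr_ge0; [apply: mulr_ge0; apply: ltW | rewrite subr_ge0].
  nra.
have He i : e i @ at_right 0 --> e i 0.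
  have H := cvgB (cvgD (cvg_sum_ord (fun j => cvgMl_tmp (a := L i j) (cvg_coord j 0 x0)))
     (cvg_coord i 0 xi0)) (cvg_coord i 0 g0).
  suff -> : e i 0 = \sum_(j < n) L i j * x 0 j 0 + xi 0 i 0 - gamma 0 i 0 by exact: H.
  by rewrite /e /= fct_sumE.
have HN : N @ at_right 0 --> N 0.
  have H := cvg_sum_ord (fun i => cvgM (He i) (He i)).
  suff -> : N 0 = \sum_(i < n) (e i 0 * e i 0) by exact: H.
  by rewrite /N fct_sumE; apply: eq_bigr => i _; rewrite expr2.
have hS0 : Sf @ at_right 0 --> Sf 0.
  exact: (continuous_cvg _ (@sqrt_continuous R _) (cvgD HN (cvg_cst (del ^+ 2)))).
have cmp := compare lam0 t0 hSd hSb hS0.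
have s1 : Num.sqrt (N t) <= Sf t.
  have H : N t <= N t + del ^+ 2 by rewrite lerDl sqr_ge0.
  exact: ler_wsqrtr H.
have s2 : Sf 0 <= Num.sqrt (N 0) + del.
  rewrite /Sf -[X in _ <= X](@gtr0_norm _ (Num.sqrt (N 0) + del)); last first.
    by apply: ltr_wpDl => //; exact: sqrtr_ge0.
  rewrite -sqrtr_sqr; apply: ler_wsqrtr.
  have := sqr_sqrtr (N0 0); have := sqrtr_ge0 (N 0).
  set r := Num.sqrt (N 0); set NN := N 0 => hr0 hr.
  rewrite sqrrD hr; have : 0 <= r * del *+ 2.
    by rewrite mulrn_wge0 // mulr_ge0 // ltW.
  lra.
have E0 : 0 <= expR (- lam * t) by apply: expR_ge0.
have E1 : expR (- lam * t) <= 1.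
  by rewrite expR_le1 mulNr oppr_le0; apply: mulr_ge0 => //; apply: ltW.
have s3 : expR (- lam * t) * Sf 0 <= expR (- lam * t) * (Num.sqrt (N 0) + del).
  exact: ler_wpM2l.
have s4 : (dgbar + lam * del) / lam = dgbar / lam + del.
  by field; apply: lt0r_neq0.
rewrite s4 in cmp.
set E := expR (- lam * t) in E0 E1 s3 cmp *.
set D := dgbar / lam in cmp *.
have : (D + del) * (1 - E) = D * (1 - E) + del * (1 - E) by ring.
nra.
Qed.
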